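(* Let $a,b\in\mathbb{C}$ with $a\neq 0$. Let $y(x)=M(1;a;b;x)\in\mathbb{C}[[x]]$ be the master series with parameters $m=1$, $a$, $b$, i.e. $$y(x)=1+x+\sum_{\ell=2}^{\infty}\frac{x^{\ell}}{\ell!}\prod_{\gamma=1}^{\ell-1}(1-a\gamma+b\ell).$$ Then $y$ satisfies, as an identity of formal power series, $y^{a}=1+a\,x\,y^{b}$.
   Context: For $m,a,b\in\mathbb{C}$ the master series is the formal power series $M(m;a;b;x)=m+x+\sum_{\ell\ge 2}\frac{x^\ell}{\ell!}\prod_{\gamma=1}^{\ell-1}(m-a\gamma+b\ell)$. For a formal power series $f$ with constant term $1$ and $p\in\mathbb{C}$, $f^{p}$ denotes the formal power series $\exp(p\log f)$ (binomial series), so that $f^p$ has constant term $1$. *)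

(* Defs.v *)
From HB Require Import structures.
From mathcomp Require Import all_boot all_order all_algebra.
From mathcomp Require Import reals.
From mathcomp Require Import complex.
Set Implicit Arguments. Unset Strict Implicit. Unset Printing Implicit Defensive.
Import Order.TTheory GRing.Theory Num.Theory.
Local Open Scope ring_scope.
Local Open Scope complex_scope.

Section FPS.
Variable C : fieldType.

Definition fps := nat -> C.

Definition fps_one : fps := fun n => (n == 0%N)%:R.
Definition fps_X : fps := fun n => (n == 1%N)%:R.
Definition fps_add (f g : fps) : fps := fun n => f n + g n.
Definition fps_sub (f g : fps) : fps := fun n => f n - g n.
Definition fps_scale (c : C) (f : fps) : fps := fun n => c * f n.
Definition fps_mul (f g : fps) : fps :=
  fun n => \sum_(i < n.+1) f i * g (n - i)%N.
Definition fps_pow (f : fps) (k : nat) : fps := iter k (fps_mul f) fps_one.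

(* log f = sum_{k>=1} (-1)^(k+1) (f-1)^k / k, for f with constant term 1
   (the n-th coefficient only involves k <= n since (f-1)^k = O(x^k)) *)
Definition fps_log (f : fps) : fps :=
  fun n => \sum_(1 <= k < n.+1)
             ((-1) ^+ k.+1 / k%:R) * fps_pow (fps_sub f fps_one) k n.

Definition fps_exp (h : fps) : fps :=
  fun n => \sum_(k < n.+1) (k`!%:R)^-1 * fps_pow h k n.

Definition fps_cpow (f : fps) (p : C) : fps := fps_exp (fps_scale p (fps_log f)).

Definition master (m a b : C) : fps :=
  fun l => match l with
           | 0%N => m
           | 1%N => 1
           | _ => (l`!%:R)^-1 * \prod_(1 <= g < l) (m - a * g%:R + b * l%:R)
           end.
End FPS.

(* Main.v *)
Require Import Defs.
From HB Require Import structures.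
From mathcomp Require Import all_boot all_order all_algebra.
From mathcomp Require Import reals.
From mathcomp Require Import complex.
From mathcomp Require Import ring zify.
From Stdlib Require Import FunctionalExtensionality.
Set Implicit Arguments. Unset Strict Implicit. Unset Printing Implicit Defensive.
Import Order.TTheory GRing.Theory Num.Theory.
Local Open Scope ring_scope.

Section Gen.
Variable C : fieldType.
Hypothesis natn0 : forall n, (n.+1)%:R != 0 :> C.
Implicit Types f g h : fps C.

Definition fd (f : fps C) : fps C := fun n => n.+1%:R * f n.+1.
Definition tr (N : nat) (f : fps C) : {poly C} := \poly_(i < N.+1) f i.

Lemma coef_tr N f i : (i <= N)%N -> (tr N f)`_i = f i.
Proof. by move=> hi; rewrite /tr coef_poly ltnS hi. Qed.

Lemma mul_coef (p q : {poly C}) f g n :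
  (forall i, (i <= n)%N -> p`_i = f i) -> (forall i, (i <= n)%N -> q`_i = g i) ->
  (p * q)`_n = fps_mul f g n.
Proof.
move=> hp hq; rewrite coefM /fps_mul; apply: eq_bigr => i _.
rewrite hp; last by rewrite -ltnS.
by rewrite hq // leq_subr.
Qed.

Lemma fps_mulC f g n : fps_mul f g n = fps_mul g f n.
Proof.
rewrite -(@mul_coef (tr n f) (tr n g)); try by move=> i hi; rewrite coef_tr.
rewrite mulrC; apply: mul_coef => i hi; by rewrite coef_tr.
Qed.

Lemma pow_tr f k n N : (n <= N)%N -> fps_pow f k n = ((tr N f)^+k)`_n.
Proof.
elim: k n => [|k IH] n hn; first by rewrite expr0 coef1.
change (fps_pow f k.+1 n) with (fps_mul f (fps_pow f k) n).
rewrite exprS; symmetry; apply: mul_coef => i hi.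
  by rewrite coef_tr // (leq_trans hi hn).
by rewrite IH // (leq_trans hi hn).
Qed.

Lemma pow_small (H : {poly C}) : H`_0 = 0 -> forall k n, (n < k)%N -> (H^+k)`_n = 0.
Proof.
move=> H0; elim=> [|k IH] n hn //.
rewrite exprS coefM big1 // => i _.
case: i => [[|j] hj] /=; first by rewrite H0 mul0r.
rewrite IH ?mulr0 //; lia.
Qed.

Lemma factn0 n : (n`!)%:R != 0 :> C.
Proof. by move: (fact_gt0 n); case: (n`!) => // k _; apply: natn0. Qed.

Lemma exp_coef N h n : h 0 = 0 -> (n <= N)%N ->
  fps_exp h n = (\sum_(k < N.+1) (k`!%:R)^-1 *: (tr N h)^+k)`_n.
Proof.
move=> h0 hn.
have H0 : (tr N h)`_0 = 0 by rewrite coef_tr.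
rewrite coef_sum /fps_exp (big_ord_widen N.+1 (fun k => (k`!%:R)^-1 * fps_pow h k n)) //.
rewrite [RHS](bigID (fun k : 'I_N.+1 => (k < n.+1)%N)) /=.
rewrite [X in _ = _ + X]big1 ?addr0; last first.
  by move=> k; rewrite -leqNgt => hk; rewrite coefZ pow_small ?mulr0.
by apply: eq_bigr => k _; rewrite coefZ (pow_tr _ _ hn).
Qed.


Lemma fd_exp h : h 0 = 0 -> forall n, fd (fps_exp h) n = fps_mul (fd h) (fps_exp h) n.
Proof.
move=> h0 n; set N := n.+1; set H := tr N h.
have H0 : H`_0 = 0 by rewrite coef_tr.
pose E : {poly C} := \sum_(k < N.+1) (k`!%:R)^-1 *: H^+k.
have hE i : (i <= N)%N -> fps_exp h i = E`_i by move=> hi; exact: exp_coef.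
have dE : deriv E = (E - (N`!%:R)^-1 *: H^+N) * deriv H.
  rewrite {2}/E big_ord_recr /= addrK.
  rewrite /E big_ord_recl derivD.
  rewrite (derivZ (R:=C)) expr0 derivC scaler0 add0r raddf_sum mulr_suml.
  apply: eq_bigr => k _.
  rewrite /= derivZ deriv_exp /= -scalerAl -scaler_nat scalerA mulrC.
  congr (_ *: _); last by rewrite mulrC.
  rewrite /bump leq0n add1n factS natrM invfM mulrA mulfV ?mul1r //.
rewrite /fd (hE n.+1) //.
have -> : n.+1%:R * E`_n.+1 = (deriv E)`_n by rewrite coef_deriv mulr_natl.
rewrite dE mulrBl coefB.
have -> : (((N`!%:R)^-1 *: H^+N) * deriv H)`_n = 0.
  rewrite -scalerAl coefZ coefM big1 ?mulr0 // => i _.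
  by rewrite pow_small ?mul0r.
rewrite subr0 mulrC; apply: mul_coef => i hi.
  by rewrite coef_deriv coef_tr // mulr_natl.
by rewrite hE // (leq_trans hi (leqnSn n)).
Qed.


Lemma log_coef N f n : f 0 = 1 -> (n <= N)%N ->
  fps_log f n = (\sum_(1 <= k < N.+1) ((-1)^+k.+1 / k%:R) *:
                   (tr N (fps_sub f (fps_one C)))^+k)`_n.
Proof.
move=> f1 hn; set G := tr N _.
have G0 : G`_0 = 0 by rewrite coef_tr // /fps_sub f1 subrr.
rewrite coef_sum /fps_log [RHS](@big_cat_nat _ _ _ n.+1) //=.
rewrite [X in _ = _ + X]big_nat_cond [X in _ = _ + X]big1 ?addr0.
  by apply: eq_bigr => k _; rewrite coefZ (pow_tr _ _ hn).
by move=> k /andP[/andP[hk _] _]; rewrite coefZ pow_small ?mulr0.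
Qed.

Lemma fd_log f : f 0 = 1 -> forall n, fps_mul f (fd (fps_log f)) n = fd f n.
Proof.
move=> f1 n; set N := n.+1; set G := tr N (fps_sub f (fps_one C)).
have G0 : G`_0 = 0 by rewrite coef_tr // /fps_sub f1 subrr.
pose Lp : {poly C} := \sum_(1 <= k < N.+1) ((-1)^+k.+1 / k%:R) *: G^+k.
have hL i : (i <= N)%N -> fps_log f i = Lp`_i by move=> hi; exact: log_coef.
have hF : tr N f = 1 + G.
  apply/polyP => i; rewrite coefD coef1 !coef_poly /fps_sub /fps_one.
  case: ifP => hi; first by rewrite addrC subrK.
  by case: i hi => [|i] hi //; rewrite addr0.
have dL : deriv Lp = (\sum_(k < N) (-G)^+k) * deriv G.
  rewrite /Lp big_add1 /= big_mkord raddf_sum mulr_suml; apply: eq_bigr => k _.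
  rewrite /= derivZ deriv_exp /= -scaler_nat scalerA (mulrC (deriv G)) scalerAl.
  congr (_ * _); rewrite -scaleN1r exprZn; congr (_ *: _).
  by rewrite divfK // !exprS !mulN1r opprK.
have hS : (1 + G) * \sum_(k < N) (-G)^+k = 1 - (-G)^+N.
  have e := subrX1 (-G) N.
  by rewrite -[(1 + G) * _]opprK -mulNr opprD addrC -e opprB.
rewrite -(@mul_coef (tr N f) (deriv Lp)).
- rewrite hF dL mulrA hS mulrBl mul1r coefB.
  have -> : ((-G)^+N * deriv G)`_n = 0.
    rewrite coefM big1 // => i _.
    by rewrite pow_small ?mul0r // coefN G0 oppr0.
  by rewrite subr0 coef_deriv /fd coef_tr // /fps_sub /fps_one /= subr0 mulr_natl.
- by move=> i hi; rewrite coef_tr // (leq_trans hi).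
- by move=> i hi; rewrite coef_deriv /fd hL ?mulr_natl.
Qed.


Lemma ode_uniq g E F : E 0 = F 0 -> (forall n, fd E n = fps_mul g E n) ->
  (forall n, fd F n = fps_mul g F n) -> E = F.
Proof.
move=> e0 hE hF.
suff H : forall n j, (j <= n)%N -> E j = F j.
  by apply: functional_extensionality => j; exact: (H j).
elim=> [|n IH] j hj.
  by move: hj; rewrite leqn0 => /eqP ->.
rewrite leq_eqVlt in hj; case/orP: hj => [/eqP->|hj]; last by apply: IH; rewrite -ltnS.
have e1 := hE n; have e2 := hF n; rewrite /fd in e1 e2.
apply: (mulfI (natn0 n)); rewrite e1 e2 /fps_mul; apply: eq_bigr => i _.
by rewrite IH // leq_subr.
Qed.

Lemma mul_cancel f d : f 0 = 1 -> (forall n, fps_mul f d n = 0) -> forall n, d n = 0.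
Proof.
move=> f1 hd.
suff H : forall n j, (j <= n)%N -> d j = 0 by move=> n; exact: (H n).
elim=> [|n IH] j hj.
  move: hj; rewrite leqn0 => /eqP ->.
  by have := hd 0; rewrite /fps_mul big_ord1 f1 mul1r.
rewrite leq_eqVlt in hj; case/orP: hj => [/eqP->|hj]; last by apply: IH; rewrite -ltnS.
have := hd n.+1; rewrite /fps_mul big_ord_recl [X in _ + X]big1 ?addr0 ?f1 ?mul1r ?subn0 //.
move=> i _; rewrite IH ?mulr0 //.
by rewrite /= /bump leq0n add1n subSS leq_subr.
Qed.

Lemma log_uniq f u v : f 0 = 1 -> u 0 = v 0 ->
  (forall n, fps_mul f (fd u) n = fps_mul f (fd v) n) -> u = v.
Proof.
move=> f1 e0 h.
have hd := @mul_cancel f (fun n => fd u n - fd v n) f1.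
have hfd : forall n, fd u n = fd v n.
  move=> n; apply/eqP; rewrite -subr_eq0; apply/eqP; apply: hd => m.
  rewrite /fps_mul; under eq_bigr => i _ do rewrite mulrBr.
  by rewrite sumrB; apply/eqP; rewrite subr_eq0; apply/eqP; exact: (h m).
apply: functional_extensionality => -[|n] //.
by have := hfd n; rewrite /fd => /(mulfI (natn0 n)).
Qed.

End Gen.

Section Master.
Variable C : fieldType.
Hypothesis natn0 : forall n, (n.+1)%:R != 0 :> C.
Variables (a b : C).
Hypothesis ha : a != 0.

Lemma factM0 n : (n`!)%:R != 0 :> C.
Proof. by move: (fact_gt0 n); case: (n`!) => // k _; apply: natn0. Qed.

Definition Q (m : C) (n : nat) : C :=
  if n is 0 then 1 else (n`!%:R)^-1 * (m * \prod_(1 <= g < n) (m - a * g%:R + b * n%:R)).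
Definition Rf (m : C) (n : nat) : C :=
  (n.-1`!%:R)^-1 * \prod_(1 <= g < n) (m - a * g%:R + b * n%:R).
Definition T (m : C) (n : nat) : C := \sum_(1 <= k < n.+1) Rf 0 k * Q m (n - k).

Lemma F1 m j : Q m j.+1 - Q (m - a) j.+1 = a * Q (m - a + b) j.
Proof.
case: j => [|j].
  by rewrite /Q !big_geq //= invr1 !mul1r !mulr1 opprB addrC subrK.
set J := j.+2.
set P := \prod_(1 <= g < j.+1) (m - a * g.+1%:R + b * J%:R).
have e1 : Q m J = (J`!%:R)^-1 * (m * ((m - a + b * J%:R) * P)).
  rewrite /Q /J big_nat_recl //; congr (_ * (_ * (_ * _))); ring.
have e2 : Q (m - a) J = (J`!%:R)^-1 * ((m - a) * (P * (m - a * J%:R + b * J%:R))).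
  rewrite /Q /J big_nat_recr //=; congr (_ * (_ * (_ * _))); last by rewrite /J; ring.
  by apply: eq_bigr => g _; rewrite /J; ring.
have e3 : Q (m - a + b) j.+1 = (j.+1`!%:R)^-1 * ((m - a + b) * P).
  rewrite /Q; congr (_ * (_ * _)); apply: eq_bigr => g _; rewrite /J; ring.
rewrite e1 e2 e3 /J factS natrM invfM.
field.
by rewrite factM0 /= -natrD add2n natn0.
Qed.


Lemma F2 m j : Rf m j.+2 - Rf (m - a) j.+2 = a * Rf (m - a + b) j.+1.
Proof.
set J := j.+2.
set P := \prod_(1 <= g < j.+1) (m - a * g.+1%:R + b * J%:R).
have e1 : Rf m J = (j.+1`!%:R)^-1 * ((m - a + b * J%:R) * P).
  rewrite /Rf /J big_nat_recl //; congr (_ * (_ * _)); ring.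
have e2 : Rf (m - a) J = (j.+1`!%:R)^-1 * (P * (m - a * J%:R + b * J%:R)).
  rewrite /Rf /J big_nat_recr //=; congr (_ * (_ * _)); last by rewrite /J; ring.
  by apply: eq_bigr => g _; rewrite /J; ring.
have e3 : Rf (m - a + b) j.+1 = (j`!%:R)^-1 * P.
  rewrite /Rf; congr (_ * _); apply: eq_bigr => g _; rewrite /J; ring.
rewrite e1 e2 e3 /J factS natrM invfM.
field.
by rewrite factM0 /= addrC natr1 natn0.
Qed.

Lemma q0 x : Q x 0 = 1. Proof. by []. Qed.

Lemma Tshift m n : T m n.+1 - T (m - a) n.+1 = a * T (m - a + b) n.
Proof.
rewrite /T !(big_nat_recr n.+1 1) //= subnn !q0.
have -> : forall x y z : C, (x + z) - (y + z) = x - y by move=> x y z; ring.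
rewrite -sumrB mulr_sumr; apply: eq_big_nat => k /andP[hk1 hk2].
rewrite -mulrBr subSn; last by rewrite -ltnS.
by rewrite F1; ring.
Qed.

Lemma T0 n : T 0 n.+1 = Rf 0 n.+1.
Proof.
rewrite /T big_nat_recr //= subnn q0 mulr1 big_nat_cond big1 ?add0r // => k.
move=> /andP[/andP[hk1 hk2] _].
rewrite subSn; last by rewrite -ltnS.
by rewrite /Q /= mul0r !mulr0.
Qed.


Definition pf (F : C -> C) := exists p : {poly C}, forall m, F m = p.[m].

Lemma pf_ext F G : (forall m, F m = G m) -> pf G -> pf F.
Proof. by move=> e [p hp]; exists p => m; rewrite e hp. Qed.

Lemma pf_C c : pf (fun _ => c).
Proof. by exists c%:P => m; rewrite hornerC. Qed.

Lemma pf_X : pf (fun m => m).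
Proof. by exists 'X => m; rewrite hornerX. Qed.

Lemma pf_add F G : pf F -> pf G -> pf (fun m => F m + G m).
Proof. by move=> [p hp] [q hq]; exists (p + q) => m; rewrite hornerD hp hq. Qed.

Lemma pf_mul F G : pf F -> pf G -> pf (fun m => F m * G m).
Proof. by move=> [p hp] [q hq]; exists (p * q) => m; rewrite hornerM hp hq. Qed.

Lemma pf_opp F : pf F -> pf (fun m => - F m).
Proof. by move=> [p hp]; exists (- p) => m; rewrite hornerN hp. Qed.

Lemma pf_prod (r : seq nat) (F : nat -> C -> C) :
  (forall i, pf (F i)) -> pf (fun m => \prod_(i <- r) F i m).
Proof.
move=> hF; elim: r => [|i r IH].
  by apply: (pf_ext (G := fun _ => 1)) => [m|]; rewrite ?big_nil //; apply: pf_C.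
apply: (pf_ext (G := fun m => F i m * \prod_(j <- r) F j m)) => [m|].
  by rewrite big_cons.
exact: pf_mul.
Qed.

Lemma pf_sum (r : seq nat) (F : nat -> C -> C) :
  (forall i, pf (F i)) -> pf (fun m => \sum_(i <- r) F i m).
Proof.
move=> hF; elim: r => [|i r IH].
  by apply: (pf_ext (G := fun _ => 0)) => [m|]; rewrite ?big_nil //; apply: pf_C.
apply: (pf_ext (G := fun m => F i m + \sum_(j <- r) F j m)) => [m|].
  by rewrite big_cons.
exact: pf_add.
Qed.

Lemma pf_lin (n : nat) g : pf (fun m => m - a * g%:R + b * n%:R).
Proof.
apply: (pf_ext (G := fun m => m + (- (a * g%:R) + b * n%:R))) => [m|].
  by rewrite addrA.
by apply: pf_add; [apply: pf_X | apply: pf_C].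
Qed.

Lemma pf_Q n : pf (fun m => Q m n).
Proof.
case: n => [|n]; first exact: pf_C.
apply: pf_mul; first exact: pf_C.
apply: pf_mul; first exact: pf_X.
by apply: pf_prod => g; apply: pf_lin.
Qed.

Lemma pf_Rf n : pf (fun m => Rf m n).
Proof.
apply: pf_mul; first exact: pf_C.
by apply: pf_prod => g; apply: pf_lin.
Qed.

Lemma pf_T n : pf (fun m => T m n).
Proof.
apply: pf_sum => k; apply: pf_mul; first exact: pf_C.
exact: pf_Q.
Qed.

Lemma natr_inj i j : i%:R = j%:R :> C -> i = j.
Proof.
wlog h : i j / (i <= j)%N.
  move=> W e; case: (leqP i j) => h'; first exact: W.
  by symmetry; apply: W => //; exact: ltnW.
move=> e; move: h; rewrite leq_eqVlt => /orP[/eqP // | h].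
have : (j - i)%:R = 0 :> C by rewrite natrB ?e ?subrr //; exact: ltnW.
have : (0 < j - i)%N by rewrite subn_gt0.
by case: (j - i)%N => // d _ /eqP; rewrite (negbTE (natn0 d)).
Qed.

Lemma pf_periodic F : pf F -> (forall m, F m = F (m - a)) -> F 0 = 0 -> forall m, F m = 0.
Proof.
case=> p hp per F0.
have roots : forall k, p.[- (k%:R * a)] = 0.
  elim=> [|k IH]; first by rewrite -hp mul0r oppr0.
  have e : - (k.+1%:R * a) = - (k%:R * a) - a by rewrite -natr1; ring.
  by rewrite -hp e -per hp.
have p0 : p = 0.
  apply/eqP; apply/negPn/negP => pn0.
  have := @max_poly_roots _ p [seq - (k%:R * a) | k <- iota 0 (size p)] pn0.
  rewrite size_map size_iota ltnn => H; suff: false by []; apply: H.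
    by apply/allP => x /mapP [k _ ->]; rewrite /root roots eqxx.
  rewrite map_inj_uniq ?iota_uniq // => i j /eqP; rewrite eqr_opp => /eqP.
  by move/(mulIf ha); apply: natr_inj.
by move=> m; rewrite hp p0 horner0.
Qed.

Lemma T_eq_R n m : T m n.+1 = Rf m n.+1.
Proof.
elim: n m => [|n IH] m.
  by rewrite /T big_nat1 subnn q0 mulr1 /Rf !big_geq.
pose F := fun x => T x n.+2 - Rf x n.+2.
suff : F m = 0 by move/eqP; rewrite subr_eq0 => /eqP.
apply: pf_periodic => [| x |].
- by apply: pf_add; [apply: pf_T | apply: pf_opp; apply: pf_Rf].
- have e1 := Tshift x n.+1; have e2 := F2 x n.
  rewrite IH in e1.
  have h : (T x n.+2 - T (x - a) n.+2) - (Rf x n.+2 - Rf (x - a) n.+2) = 0.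
    by rewrite e1 e2 subrr.
  apply/eqP; rewrite -subr_eq0 -h /F; apply/eqP; ring.
- by rewrite /F T0 subrr.
Qed.


Definition Ls : fps C := fun n =>
  if n is 0 then 0 else (n`!%:R)^-1 * \prod_(1 <= g < n) (0 - a * g%:R + b * n%:R).

Lemma LR i : i.+1%:R * Ls i.+1 = Rf 0 i.+1.
Proof.
rewrite /Ls /Rf /= factS natrM invfM !mulrA mulfV ?mul1r //.
Qed.

Lemma QR m n : n.+1%:R * Q m n.+1 = m * Rf m n.+1.
Proof.
rewrite /Q /Rf /= factS natrM invfM !mulrA mulfV ?mul1r //.
by rewrite (mulrC m).
Qed.

Lemma stepA m n : fd (Q m) n = fps_mul (fd (fps_scale m Ls)) (Q m) n.
Proof.
rewrite /fd QR -T_eq_R /T big_add1 /= big_mkord mulr_sumr; apply: eq_bigr => i _.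
by rewrite subSS /fps_scale -LR; ring.
Qed.

Lemma exp0 (h : fps C) : fps_exp h 0 = 1.
Proof. by rewrite /fps_exp big_ord1 /= /fps_one /= invr1 mulr1. Qed.

Lemma P_exp m : Q m = fps_exp (fps_scale m Ls).
Proof.
apply: (ode_uniq natn0 (g := fd (fps_scale m Ls))).
- by rewrite exp0.
- exact: stepA.
- by apply: fd_exp => //; rewrite /fps_scale /= mulr0.
Qed.

Lemma mulX (g : fps C) n : fps_mul (fps_X C) g n = if n is j.+1 then g j else 0.
Proof.
case: n => [|j]; first by rewrite /fps_mul big_ord1 /fps_X /= mul0r.
rewrite /fps_mul big_ord_recl big_ord_recl big1.
  by rewrite /fps_X /= mul0r add0r mul1r addr0 subn1.
by move=> i _; rewrite /fps_X /= mul0r.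
Qed.

Lemma F3 j : Q a j.+1 = a * Q b j.
Proof.
case: j => [|j].
  by rewrite /Q /= big_geq //= invr1 mul1r mulr1.
set P := \prod_(1 <= g < j.+1) (b - a * g%:R + b * j.+1%:R).
have e1 : Q a j.+2 = (j.+2`!%:R)^-1 * (a * (b * j.+2%:R * P)).
  rewrite /Q big_nat_recl //; congr (_ * (_ * (_ * _))); first by ring.
  by apply: eq_bigr => g _; ring.
rewrite e1 /Q -/P factS natrM invfM.
field.
by rewrite factM0 /= -natrD add2n natn0.
Qed.

Lemma main_gen : fps_cpow (master 1 a b) a
  = fps_add (fps_one C) (fps_scale a (fps_mul (fps_X C) (fps_cpow (master 1 a b) b))).
Proof.
have hy : master 1 a b = Q 1.
  apply: functional_extensionality => -[|[|n]] //.
    by rewrite /Q /= big_geq //= invr1 mul1r mulr1.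
  by rewrite /Q /= mul1r.
have hs1 : fps_scale 1 Ls = Ls.
  by apply: functional_extensionality => n; rewrite /fps_scale mul1r.
have hyE : Q 1 = fps_exp Ls by rewrite P_exp hs1.
have hlog : fps_log (Q 1) = Ls.
  apply: (log_uniq natn0 (f := Q 1)) => //.
    by rewrite /fps_log big_geq.
  move=> n; rewrite fd_log //.
  by rewrite hyE fd_exp // fps_mulC.
rewrite hy /fps_cpow hlog -!P_exp.
apply: functional_extensionality => n; rewrite /fps_add /fps_scale mulX.
case: n => [|j]; first by rewrite mulr0 addr0.
by rewrite F3 /fps_one /= add0r.
Qed.

End Master.


Local Open Scope complex_scope.

Theorem mainTheorem1 (R : realType) (a b : R[i]) (ha : a != 0) :
  fps_cpow (master 1 a b) a
  = fps_add (fps_one R[i]) (fps_scale a (fps_mul (fps_X R[i]) (fps_cpow (master 1 a b) b))).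
Proof.
apply: main_gen => // n.
by rewrite pnatr_eq0.
Qed.
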